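(* Let $0<e<d$ be coprime integers and let $e'$ be the unique integer with $0<e'<d$ and $ee'\equiv1\pmod d$. Let $J=\{(i,j)\in\mathbb{Z}_{\ge0}^2\setminus\{(0,0)\}: i+ej\equiv0\pmod d,\ i<e,\ j<e'\}$. Then $|J|\le1$ if and only if $e$ divides $d+1$. *)

(* Defs.v *)
From mathcomp Require Import all_boot.
Set Implicit Arguments. Unset Strict Implicit. Unset Printing Implicit Defensive.

Definition Jset (d e e' : nat) : {set 'I_e * 'I_e'} :=
  [set p : 'I_e * 'I_e' |
     ((p.1 : nat), (p.2 : nat)) != (0, 0) & d %| (p.1 : nat) + e * p.2].

(* Main.v *)
Require Import Defs.
From mathcomp Require Import all_boot zify.

Lemma inJ_sum (d e e' : nat) (p : 'I_e * 'I_e') :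
  p \in Jset d e e' -> 0 < (p.1 : nat) + p.2 /\ d %| (p.1 : nat) + e * p.2.
Proof.
rewrite inE => /andP [h1 h2]; split => //.
case: p h1 h2 => [[x hx] [y hy]] /= h1 _.
case: x hx h1 => [|x] hx h1 //; case: y hy h1 => [|y] hy h1 //.
Qed.

Theorem lemma5p3 (d e e' : nat) :
  0 < e -> e < d -> coprime e d ->
  0 < e' -> e' < d -> e * e' = 1 %[mod d] ->
  (#|Jset d e e'| <= 1) = (e %| d.+1).
Proof.
move=> e0 ed cop e'0 e'd hm.
have d1 : 1 < d by lia.
have hm1 : (e * e') %% d = 1 by rewrite hm modn_small.
have hdiv := divn_eq (e * e') d.
rewrite hm1 in hdiv.
move: ((e * e') %/ d) hdiv => m hdiv.
apply/idP/idP.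
- move=> hc.
  case: (leqP m 1) => hm2.
  + case: m hdiv hm2 => [|[|m]] // hdiv _.
    * have : e = 1 by nia.
      by move->; rewrite dvd1n.
    * by apply/dvdnP; exists e'; rewrite mulnC hdiv; lia.
  + exfalso.
    have mk : forall a, 0 < a -> a <= 2 ->
      exists p : 'I_e * 'I_e', p \in Jset d e e' /\ (p.1 : nat) + e * p.2 = a * d.
      move=> a a0 a2.
      have hj : (a * d) %/ e < e' by rewrite ltn_divLR //; nia.
      exists (Ordinal (ltn_pmod (a * d) e0), Ordinal hj).
      have hs : (a * d) %% e + e * ((a * d) %/ e) = a * d.
        by rewrite addnC mulnC -divn_eq.
      split => //.
      rewrite inE /= hs dvdn_mull // andbT.
      apply/negP => /eqP [h1 h2].
      move: hs; rewrite h1 h2; lia.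
    have [p1 [hp1 s1]] := mk 1 isT isT.
    have [p2 [hp2 s2]] := mk 2 isT isT.
    have neq : p1 != p2.
      apply/negP => /eqP eq12; move: s1 s2; rewrite eq12; lia.
    have : #|[set p1; p2]| <= #|Jset d e e'|.
      apply: subset_leq_card; apply/subsetP => x.
      by rewrite in_set2 => /orP [] /eqP ->.
    by rewrite cards2 neq; lia.
- move=> hdv.
  have hle : e * e' <= d.+1.
    case: (leqP e 1) => he1.
    + have -> : e = 1 by lia.
      lia.
    + case/dvdnP: hdv => k hk.
      have kd : k < d by nia.
      have : e' = k.
        rewrite -(modn_small e'd) -(modn_small kd).
        have h1 : e' * (k * e) = e' %[mod d].
          by rewrite -hk mulnS -modnDmr modnMl addn0.
        rewrite -h1 mulnA [e' * k]mulnC -mulnA -modnMmr mulnC.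
        by rewrite [e' * e]mulnC hm1 mul1n.
      move=> ->; lia.
  apply/card_le1_eqP => x y hx hy.
  have key : forall p : 'I_e * 'I_e', p \in Jset d e e' ->
      (p.1 : nat) = d %% e /\ (p.2 : nat) = d %/ e.
    move=> [[a ha] [b hb]] /inJ_sum /= [hpos /dvdnP [q hq]].
    have hb' : e * b <= e * (e' - 1) by rewrite leq_mul2l; apply/orP; right; lia.
    have hq1 : q = 1 by nia.
    have hd : d = b * e + a by lia.
    rewrite hd modnMDl divnMDl // modn_small // divn_small //; lia.
  case: x hx => [x1 x2] hx; case: y hy => [y1 y2] hy.
  have [hx1 hx2] := key _ hx; have [hy1 hy2] := key _ hy.
  by congr pair; apply/val_inj; rewrite /= ?hx1 ?hy1 ?hx2 ?hy2.
Qed.
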